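(* Let $n\ge2$ and $\mu\in(0,\frac1n(\frac{n-1}{n})^{n-1}]$. Let $f>0$ be a solution on $\mathbb{R}$ of $$\mu=\frac{f(x)^{n-1}}{(1+f'(x)^2)^{1/2}}-f(x)^n,$$ and let $V=n\bigl(1+(n-1)\mu^2f^{-2n}\bigr)$. Then for every $x\in\mathbb{R}$, $V(x)f(x)^2\le n^2$.
   Context: The function $f$ is the profile of the Euclidean Delaunay unduloid $\mathcal{D}(\mu)$, parametrized by $(x,\omega)\mapsto(x,f(x)\omega)$, with constant mean curvature $1$. The function $V=\|B\|^2$ is the potential of its stability operator $\Delta-V$. The function $f$ takes values between the two positive roots $a_-(\mu)\le a_+(\mu)$ of $X^n-X^{n-1}+\mu=0$. *)

(* Defs.v *)
From Stdlib Require Import Reals.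
From Coquelicot Require Import Coquelicot.
Open Scope R_scope.

Definition potV (n : nat) (mu fx : R) : R :=
  INR n * (1 + (INR n - 1) * mu ^ 2 / fx ^ (2 * n)).

(* Main.v *)
Require Import Defs.
From Stdlib Require Import Reals Lra Psatz.
From Coquelicot Require Import Coquelicot.
Open Scope R_scope.

Theorem lemma3p1 (n : nat) (mu : R) (f : R -> R)
  (hn : (2 <= n)%nat)
  (hmu0 : 0 < mu)
  (hmu1 : mu <= / INR n * ((INR n - 1) / INR n) ^ (n - 1))
  (hpos : forall x, 0 < f x)
  (hder : forall x, ex_derive f x)
  (hode : forall x,
     mu = f x ^ (n - 1) / sqrt (1 + (Derive f x) ^ 2) - f x ^ n) :
  forall x, potV n mu (f x) * f x ^ 2 <= INR n ^ 2.
Proof.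
  intros x. unfold potV.
  specialize (hode x). specialize (hpos x).
  set (y := f x) in *. set (d := Derive f x) in *.
  set (s := sqrt (1 + d ^ 2)) in *.
  assert (hs1 : 1 <= s).
  { unfold s. rewrite <- sqrt_1 at 1. apply sqrt_le_1_alt. nra. }
  set (t := / s).
  assert (ht0 : 0 < t) by (unfold t; apply Rinv_0_lt_compat; lra).
  assert (ht1 : t <= 1).
  { unfold t. apply (Rmult_le_reg_l s); [lra|]. rewrite Rinv_r; lra. }
  destruct n as [|m]; [lia|].
  replace (S m - 1)%nat with m in hode by lia.
  set (a := y ^ m) in *.
  assert (ha : 0 < a) by (unfold a; apply pow_lt; lra).
  assert (hyn : y ^ S m = a * y) by (unfold a; simpl; ring).
  assert (hy2n : y ^ (2 * S m) = (a * y) ^ 2).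
  { rewrite Nat.mul_comm, pow_mult, hyn. reflexivity. }
  rewrite hyn in hode. rewrite hy2n.
  assert (hmu : mu = a * (t - y)) by (rewrite hode; unfold t, Rdiv; ring).
  assert (hty : y < t) by nra.
  assert (hN : 1 <= INR (S m)) by (rewrite S_INR; pose proof (pos_INR m); lra).
  replace (INR (S m) * (1 + (INR (S m) - 1) * mu ^ 2 / (a * y) ^ 2) * y ^ 2)
    with (INR (S m) * (y ^ 2 + (INR (S m) - 1) * (t - y) ^ 2)).
  2:{ rewrite hmu. field. lra. }
  apply Rle_trans with (INR (S m) * (1 + (INR (S m) - 1) * 1)).
  - apply Rmult_le_compat_l; [lra|].
    assert (y^2 <= 1) by nra. assert ((t-y)^2 <= 1) by nra.
    assert ((INR (S m) - 1) * (t - y) ^ 2 <= (INR (S m) - 1) * 1)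
      by (apply Rmult_le_compat_l; lra).
    lra.
  - lra.
Qed.
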